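(* Let $(X,T)$ be a minimal topological dynamical system with $T$ a homeomorphism. If there are $x\ne y$ in $X$ such that $(x,y)$ is proximal for $T^{-1}$ and $\inf_{n\in\mathbb{Z}_+}d(T^nx,T^ny)>0$, then $(X,T)$ is strongly $\mathcal{F}_t$-sensitive.
   Context: A topological dynamical system: compact metric space $(X,d)$ with continuous surjection $T$; minimal means every orbit is dense. $(x,y)$ is proximal for $T^{-1}$ if $\inf_{n\ge0}d(T^{-n}x,T^{-n}y)=0$. $(X,T)$ is strongly $\mathcal{F}_t$-sensitive if there is $\delta>0$ such that for each nonempty open $U$ there are $x,y\in U$ with $\{n\in\mathbb{Z}_+:d(T^nx,T^ny)>\delta\}$ thick (containing arbitrarily long blocks of consecutive integers). *)

(* Defs.v *)
From HB Require Import structures.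
From mathcomp Require Import all_boot all_order all_algebra.
From mathcomp Require Import all_classical all_reals all_analysis.
Set Implicit Arguments. Unset Strict Implicit. Unset Printing Implicit Defensive.
Import Order.TTheory GRing.Theory Num.Theory.
Local Open Scope classical_set_scope.
Local Open Scope ring_scope.

Definition minimal_system {R : realType} (X : metricType R) (T : X -> X) : Prop :=
  forall x : X, closure (range (fun n : nat => iter n T x)) = [set: X].

Definition proximal_for {R : realType} (X : metricType R) (S : X -> X) (x y : X) : Prop :=
  forall e : R, 0 < e -> exists n : nat, mdist (iter n S x) (iter n S y) < e.

Definition thick (A : set nat) : Prop :=
  forall L : nat, exists m : nat, forall i : nat, (i < L)%N -> A (m + i)%N.

Definition strongly_Ft_sensitive {R : realType} (X : metricType R) (T : X -> X) : Prop :=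
  exists delta : R, 0 < delta /\
    forall U : set X, open U -> U !=set0 ->
      exists x y : X, U x /\ U y /\
        thick [set n : nat | delta < mdist (iter n T x) (iter n T y)].

(* Main.v *)
Require Import Defs.
From HB Require Import structures.
From mathcomp Require Import all_boot all_order all_algebra.
From mathcomp Require Import all_classical all_reals all_analysis.
Import Order.TTheory GRing.Theory Num.Theory.
Local Open Scope classical_set_scope.
Local Open Scope ring_scope.

Lemma iter_cont (R : realType) (X : metricType R) (T : X -> X) n :
  continuous T -> continuous (iter n T).
Proof.
move=> cT; elim: n => [|n IH] /=; first by move=> x; exact: cvg_id.
move=> x; exact: (continuous_comp (IH x) (cT _)).
Qed.

Lemma iter_cancel (X : Type) (T Tinv : X -> X) n x :
  cancel Tinv T -> iter n T (iter n Tinv x) = x.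
Proof.
move=> K; elim: n x => [//|n IH] x.
by rewrite iterSr iterS K IH.
Qed.

Lemma iter_back (X : Type) (T Tinv : X -> X) n k x :
  cancel Tinv T -> (n <= k)%N -> iter k T (iter n Tinv x) = iter (k - n) T x.
Proof.
move=> K nk; rewrite -(subnK nk) iterD addnK iter_cancel //.
Qed.

Theorem proposition5p12 (R : realType) (X : metricType R) (T Tinv : X -> X) :
  compact [set: X] ->
  continuous T -> continuous Tinv ->
  cancel T Tinv -> cancel Tinv T ->
  minimal_system T ->
  (exists x y : X, x <> y /\ proximal_for Tinv x y /\
     exists c : R, 0 < c /\ forall n : nat, c <= mdist (iter n T x) (iter n T y)) ->
  strongly_Ft_sensitive T.
Proof.
move=> cX cT cTi K1 K2 mini [x [y [xy [prox [c [c0 cle]]]]]].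
exists (c / 2); split; first by rewrite divr_gt0.
move=> U oU [u Uu].
pose P := fun (e : R) (w : X) => 0 < e /\ exists j : nat, forall b, ball w e b ->
  U (iter j T w) /\ U (iter j T b).
have cov : forall w, [set: X] w -> \forall w' \near w & e \near (0:R)^'+, P e w'.
  move=> w _.
  have [j Uj] : exists j, U (iter j T w).
    have := mini w; rewrite -subTset => /(_ u I).
    move=> /(_ U (open_nbhs_nbhs (conj oU Uu))) [z [[j _ <-] Uz]].
    by exists j.
  have : nbhs w (iter j T @^-1` U).
    exact: (@iter_cont _ _ T j cT w _ (open_nbhs_nbhs (conj oU Uj))).
  move=> /nbhs_ballP [rho rho0 sub].
  exists (ball w (rho / 2), [set e | 0 < e /\ e < rho / 2]).
    split; first by apply: nbhsx_ballx; rewrite divr_gt0.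
    have r2 : 0 < rho / 2 by rewrite divr_gt0.
    near=> e; split; [exact: (near (nbhs_right_gt 0) e)|].
    exact: (near (nbhs_right_lt r2) e).
  move=> [w' e] /= [bw' [e0 erho]]; split => //; exists j => b bb; split.
    by apply: sub; apply: (le_ball _ bw'); rewrite ler_pdivrMr // ler_peMr // ?ler1n // ltW.
  apply: sub; rewrite (splitr rho); apply: (ball_triangle bw').
  by apply: (le_ball _ bb); rewrite ltW.
have FF : Filter (0:R)^'+ by exact: at_right_proper_filter.
have Hn := (proj1 (compact_near_coveringP _) cX R _ P FF cov).
have [eta Hall] := @filter_ex _ _ (at_right_proper_filter (0:R)) _ Hn.
have [eta0 _] := Hall x I.
have [n dn] := prox eta eta0.
have bab : ball (iter n Tinv x) eta (iter n Tinv y) by rewrite ballEmdist.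
have [_ [j Hj]] := Hall (iter n Tinv x) I.
have [Ua Ub] := Hj _ bab.
exists (iter j T (iter n Tinv x)), (iter j T (iter n Tinv y)); split => //; split => //.
move=> L; exists n => i _ /=.
have nle : (n <= n + i + j)%N by rewrite -addnA leq_addr.
rewrite -!iterD !(@iter_back _ T Tinv _ _ _ K2 nle).
apply: (lt_le_trans _ (cle _)); rewrite ltr_pdivrMr // ltr_pMr // ltr1n //.
Unshelve. all: end_near. Qed.
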